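(* If two virtual strings $\alpha$ and $\beta$ are homotopic, then their $r$-th coverings $\alpha^{(r)}$ and $\beta^{(r)}$ are homotopic for every integer $r\ge 1$.
   Context: A virtual string $\alpha$ of rank $m\ge0$ is an oriented circle $S$ (core circle) with $2m$ distinct points partitioned into $m$ ordered pairs $(a,b)$ (arrows; $a$ tail, $b$ head). Two strings are homeomorphic if an orientation-preserving homeomorphism of core circles carries arrows onto arrows. For distinct $a,b\in S$, $ab$ is the arc from $a$ to $b$ in the positive direction. Homotopy moves: (a) for distinct $a,b\in S$ with $ab$ containing no endpoints of arrows, add the arrow $(a,b)$; (b) choose two disjoint arcs of $S$ containing no endpoints of arrows, let $a,a'$ be the endpoints of the first (in either order) and $b,b'$ of the second (in either order), and add the arrows $(a,b)$ and $(b',a')$; (c) if the string has arrows $(a^+,b),(b^+,c),(c^+,a)$ where the arcs $aa^+,bb^+,cc^+$ are pairwise disjoint and contain no other endpoints of arrows, replace these three arrows by $(a,b^+),(b,c^+),(c,a^+)$. Two strings are homotopic if they are related by a finite sequence of homeomorphisms, these moves and their inverses. For an arrow $e=(a,b)$, an arrow $f=(c,d)\ne e$ links $e$ positively if $c\in ab,d\in ba$, negatively if $c\in ba,d\in ab$; $n(e)$ is the number of arrows linking $e$ positively minus the number linking it negatively. The $r$-th covering $\alpha^{(r)}$ is the string with core circle $S$ whose arrows are the arrows $e$ of $\alpha$ with $n(e)\in r\mathbb{Z}$ (with $n(e)$ computed in $\alpha$). *)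

(* Defs.v *)
From Stdlib Require Import Relation_Operators.
From mathcomp Require Import all_boot all_order all_algebra.
Set Implicit Arguments. Unset Strict Implicit. Unset Printing Implicit Defensive.

Definition endpt := (nat * bool)%type.
Definition tl (e : nat) : endpt := (e, false).
Definition hd (e : nat) : endpt := (e, true).

(* A virtual string is the list of the 2m endpoints of its arrows, read along
   the core circle in the positive direction from some base point. *)
Definition vstring := seq endpt.
Definition wf (s : vstring) : bool :=
  uniq s && all (fun p => (p.1, ~~ p.2) \in s) s.

Definition labels (s : vstring) : seq nat := undup (map fst s).

Definition relabel (f : nat -> nat) (s : vstring) : vstring :=
  map (fun p => (f p.1, p.2)) s.

(* Homeomorphism: an orientation preserving homeomorphism of core circles
   carrying arrows onto arrows = a cyclic rotation of the word together with
   a renaming of the arrows. *)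
Definition homeomorphic (s t : vstring) : Prop :=
  wf s /\ wf t /\ exists (k : nat) (f : nat -> nat), t = rot k (relabel f s).

(* Move (a): add an arrow (a,b) whose arc ab contains no endpoints. *)
Definition move_a (s t : vstring) : Prop :=
  exists (s1 s2 : vstring) (e : nat),
    [/\ s = s1 ++ s2, e \notin map fst s & t = s1 ++ [:: tl e; hd e] ++ s2].

(* Move (b): two disjoint free arcs; the first receives a (tail of e) and
   a' (head of f) in either order, the second b (head of e) and b' (tail of f)
   in either order; arrows e = (a,b), f = (b',a'). *)
Definition move_b (s t : vstring) : Prop :=
  exists (s1 s2 s3 : vstring) (e f : nat) (X Y : vstring),
    s = s1 ++ s2 ++ s3 /\ e != f /\ e \notin map fst s /\ f \notin map fst s /\
    perm_eq X [:: tl e; hd f] /\ perm_eq Y [:: hd e; tl f] /\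
    t = s1 ++ X ++ s2 ++ Y ++ s3.

(* Move (c): arrows e1 = (a+,b), e2 = (b+,c), e3 = (c+,a) with free arcs
   aa+, bb+, cc+ are replaced by (a,b+), (b,c+), (c,a+) (keeping the names
   e1, e2, e3 for the arrows joining the same pairs of arcs).  The arcs
   aa+, bb+, cc+ may occur in either cyclic order. *)
Definition move_c (s t : vstring) : Prop :=
  exists (s1 s2 s3 s4 : vstring) (e1 e2 e3 : nat),
    (s = s1 ++ [:: hd e3; tl e1] ++ s2 ++ [:: hd e1; tl e2] ++ s3
            ++ [:: hd e2; tl e3] ++ s4 /\
     t = s1 ++ [:: tl e1; hd e3] ++ s2 ++ [:: tl e2; hd e1] ++ s3
            ++ [:: tl e3; hd e2] ++ s4) \/
    (s = s1 ++ [:: hd e3; tl e1] ++ s2 ++ [:: hd e2; tl e3] ++ s3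
            ++ [:: hd e1; tl e2] ++ s4 /\
     t = s1 ++ [:: tl e1; hd e3] ++ s2 ++ [:: tl e3; hd e2] ++ s3
            ++ [:: tl e2; hd e1] ++ s4).

Definition hstep (s t : vstring) : Prop :=
  wf s /\ wf t /\
  (homeomorphic s t \/ move_a s t \/ move_b s t \/ move_c s t).

Definition homotopic (s t : vstring) : Prop := clos_refl_sym_trans _ hstep s t.

(* x lies in the open arc from a to b (positive direction). *)
Definition in_arc (s : vstring) (a b x : endpt) : bool :=
  let i := index a s in let j := index b s in let k := index x s in
  if i < j then (i < k) && (k < j) else (i < k) || (k < j).

Definition links_pos (s : vstring) (e f : nat) : bool :=
  in_arc s (tl e) (hd e) (tl f) && in_arc s (hd e) (tl e) (hd f).
Definition links_neg (s : vstring) (e f : nat) : bool :=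
  in_arc s (hd e) (tl e) (tl f) && in_arc s (tl e) (hd e) (hd f).

Definition nidx (s : vstring) (e : nat) : int :=
  let others := [seq f <- labels s | f != e] in
  ((count (links_pos s e) others)%:Z - (count (links_neg s e) others)%:Z)%R.

Definition covering (r : nat) (s : vstring) : vstring :=
  [seq p <- s | (r%:Z %| nidx s p.1)%Z].

(* Main.v *)
Require Import Defs.
From mathcomp Require Import all_boot all_order all_algebra.
From mathcomp Require Import zify.
From Stdlib Require Import Relation_Operators.
Set Implicit Arguments. Unset Strict Implicit. Unset Printing Implicit Defensive.
Import GRing.Theory.

Definition cyc (i j k : nat) : bool :=
  if i < j then (i < k) && (k < j) else (i < k) || (k < j).
Ltac cyc_solve := rewrite /cyc; repeat match goal with |- context [ (?a < ?b) ] => case: (ltnP a b) => ? end; simpl; try lia.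

Lemma cyc_compl i j k : i != j -> i != k -> j != k -> cyc j i k = ~~ cyc i j k.
Proof. move=> *. cyc_solve. Qed.
Lemma cyc_ii i j : cyc i j i = false. Proof. cyc_solve. Qed.
Lemma cyc_jj i j : cyc i j j = false. Proof. cyc_solve. Qed.
Lemma cyc_adj i j n : i != n -> i != n.+1 -> j != n -> j != n.+1 -> cyc i j n = cyc i j n.+1.
Proof. move=> *. cyc_solve. Qed.
Lemma cyc_rot1 n i j k i' j' k' :
  (i = 0 /\ i' = n \/ i = i'.+1 /\ i' < n) ->
  (j = 0 /\ j' = n \/ j = j'.+1 /\ j' < n) ->
  (k = 0 /\ k' = n \/ k = k'.+1 /\ k' < n) -> cyc i j k = cyc i' j' k'.
Proof.
by case=> [[-> ->]|[-> ?]]; case=> [[-> ->]|[-> ?]]; case=> [[-> ->]|[-> ?]]; cyc_solve.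
Qed.

Lemma in_arcE s a b x : in_arc s a b x = cyc (index a s) (index b s) (index x s).
Proof. by []. Qed.

Lemma index_inj (T : eqType) (s : seq T) x y : x \in s -> y \in s ->
  (index x s == index y s) = (x == y).
Proof.
move=> xs ys; apply/eqP/eqP => [E|->//].
by rewrite -(nth_index x xs) E nth_index.
Qed.

Lemma idx_seg (T : eqType) (P Q R : seq T) x : uniq (P ++ Q ++ R) -> x \in Q ->
  index x (P ++ Q ++ R) = size P + index x Q.
Proof.
move=> U xQ; rewrite index_cat.
have -> : x \in P = false.
  apply/negP => xP; move: U; rewrite cat_uniq => /and3P [_ /hasPn H _].
  by move: (H x); rewrite mem_cat xQ /= xP => /(_ isT).
by rewrite index_cat xQ.
Qed.

Lemma idx_segS (T : eqType) (P Q R : seq T) x : uniq (P ++ Q ++ R) -> x \in Q ->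
  index x (P ++ Q ++ R) < size P + size Q.
Proof. by move=> U xQ; rewrite idx_seg // ltn_add2l index_mem. Qed.

Lemma before_filter (T : eqType) (p : pred T) (s : seq T) x y : p x -> p y ->
  (index x (filter p s) < index y (filter p s)) = (index x s < index y s).
Proof.
move=> px py; elim: s => [|z s IH] //=.
case pz: (p z) => /=.
  case: (z =P x) => [E|_]; case: (z =P y) => [E'|_] //=.
case: (z =P x) => [E|_]; first by rewrite -E pz in px.
by case: (z =P y) => [E|_]; [rewrite -E pz in py|].
Qed.

Lemma in_arc_filter (p : pred endpt) s a b x : p a -> p b -> p x ->
  in_arc (filter p s) a b x = in_arc s a b x.
Proof. by move=> pa pb px; rewrite /in_arc !before_filter. Qed.

Lemma in_arc_subseq s t a b x : subseq s t -> uniq t -> a \in s -> b \in s -> x \in s ->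
  in_arc s a b x = in_arc t a b x.
Proof.
move=> H U aS bS xS; rewrite {1}(elimT (subseq_uniqP U) H); exact: in_arc_filter.
Qed.

Lemma in_arc_adj A B u v a b : uniq (A ++ u :: v :: B) ->
  a \in A ++ u :: v :: B -> b \in A ++ u :: v :: B ->
  a != u -> a != v -> b != u -> b != v ->
  in_arc (A ++ u :: v :: B) a b u = in_arc (A ++ u :: v :: B) a b v.
Proof.
move=> U aI bI au av bu bv; rewrite !in_arcE.
have E1 : A ++ u :: v :: B = A ++ [:: u] ++ (v :: B) by [].
have E2 : A ++ u :: v :: B = (A ++ [:: u]) ++ [:: v] ++ B by rewrite -catA.
have iu : index u (A ++ u :: v :: B) = size A by rewrite E1 idx_seg -?E1 //= ?inE ?eqxx ?addn0.
have iv : index v (A ++ u :: v :: B) = (size A).+1.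
  by rewrite E2 idx_seg -?E2 //= ?inE ?eqxx ?size_cat ?addn0 ?addn1.
have uI : u \in A ++ u :: v :: B by rewrite mem_cat inE eqxx orbT.
have vI : v \in A ++ u :: v :: B by rewrite mem_cat !inE eqxx !orbT.
rewrite iu iv; apply: cyc_adj.
- by rewrite -iu index_inj.
- by rewrite -iv index_inj.
- by rewrite -iu index_inj.
- by rewrite -iv index_inj.
Qed.

Local Open Scope ring_scope.

Definition w (x : endpt) : int := if x.2 then -1 else 1.
Definition arcF (s : vstring) g x : int := if in_arc s (tl g) (hd g) x then w x else 0.
Definition arcsum (s : vstring) g : int := \sum_(x <- s) arcF s g x.

Lemma arc_sum (F : endpt -> int) A B C u v : uniq (A ++ u :: B ++ v :: C) ->
  \sum_(x <- A ++ u :: B ++ v :: C)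
     (if in_arc (A ++ u :: B ++ v :: C) u v x then F x else 0) = \sum_(x <- B) F x.
Proof.
set t := A ++ u :: B ++ v :: C => U.
have E1 : t = A ++ [:: u] ++ (B ++ v :: C) by [].
have E2 : t = (A ++ u :: B) ++ [:: v] ++ C by rewrite /t -catA.
have E3 : t = (A ++ [:: u]) ++ B ++ (v :: C) by rewrite /t -catA.
have E4 : t = [::] ++ A ++ (u :: B ++ v :: C) by [].
have E5 : t = (A ++ u :: B ++ [:: v]) ++ C ++ [::] by rewrite /t cats0 -catA /= -catA.
have iu : index u t = size A.
  by rewrite E1 idx_seg -?E1 ?mem_seq1 //= eqxx addn0.
have iv : index v t = (size A + (size B).+1)%N.
  by rewrite E2 idx_seg -?E2 ?mem_seq1 //= eqxx addn0 size_cat /=.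
have iA : forall x, x \in A -> (index x t < size A)%N.
  by move=> x xA; rewrite E4 idx_seg -?E4 //= index_mem.
have iB : forall x, x \in B -> (size A < index x t < size A + (size B).+1)%N.
  move=> x xB; rewrite E3 idx_seg -?E3 // size_cat /=.
  have H : (index x B < @size (prod nat bool) B)%N by rewrite index_mem.
  apply/andP; split; lia.
have iC : forall x, x \in C -> (size A + (size B).+1 < index x t)%N.
  move=> x xC; rewrite E5 idx_seg -?E5 // !size_cat /= size_cat /=; lia.
rewrite big_cat big_cons big_cat big_cons /=.
rewrite !in_arcE iu iv cyc_ii cyc_jj.
rewrite big1_seq ?add0r; last first.
  move=> x /andP [_ xA]; rewrite in_arcE iu iv; move: (iA x xA); cyc_solve.
rewrite [X in _ + X]big1_seq ?addr0; last first.
  move=> x /andP [_ xC]; rewrite in_arcE iu iv; move: (iC x xC); cyc_solve.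
apply: eq_big_seq => x xB; rewrite in_arcE iu iv; move: (iB x xB); cyc_solve.
Qed.

Lemma arc_sum_rev (F : endpt -> int) A B C u v : uniq (A ++ v :: B ++ u :: C) ->
  \sum_(x <- A ++ v :: B ++ u :: C)
     (if in_arc (A ++ v :: B ++ u :: C) u v x then F x else 0) =
  \sum_(x <- C) F x + \sum_(x <- A) F x.
Proof.
set t := A ++ v :: B ++ u :: C => U.
have E1 : t = A ++ [:: v] ++ (B ++ u :: C) by [].
have E2 : t = (A ++ v :: B) ++ [:: u] ++ C by rewrite /t -catA.
have E3 : t = (A ++ [:: v]) ++ B ++ (u :: C) by rewrite /t -catA.
have E4 : t = [::] ++ A ++ (v :: B ++ u :: C) by [].
have E5 : t = (A ++ v :: B ++ [:: u]) ++ C ++ [::] by rewrite /t cats0 -catA /= -catA.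
have iv : index v t = size A.
  by rewrite E1 idx_seg -?E1 ?mem_seq1 //= eqxx addn0.
have iu : index u t = (size A + (size B).+1)%N.
  by rewrite E2 idx_seg -?E2 ?mem_seq1 //= eqxx addn0 size_cat /=.
have iA : forall x, x \in A -> (index x t < size A)%N.
  by move=> x xA; rewrite E4 idx_seg -?E4 //= index_mem.
have iB : forall x, x \in B -> (size A < index x t < size A + (size B).+1)%N.
  move=> x xB; rewrite E3 idx_seg -?E3 // size_cat /=.
  have H : (index x B < @size (prod nat bool) B)%N by rewrite index_mem.
  apply/andP; split; lia.
have iC : forall x, x \in C -> (size A + (size B).+1 < index x t)%N.
  move=> x xC; rewrite E5 idx_seg -?E5 // !size_cat /= size_cat /=; lia.
rewrite big_cat big_cons big_cat big_cons /=.
rewrite !in_arcE iu iv cyc_ii cyc_jj.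
rewrite [\sum_(x <- B) _]big1_seq ?add0r; last first.
  move=> x /andP [_ xB]; rewrite in_arcE iu iv; move: (iB x xB); cyc_solve.
rewrite ?add0r addrC; congr (_ + _); apply: eq_big_seq => x.
  move=> xC; rewrite in_arcE iu iv; move: (iC x xC); cyc_solve.
move=> xA; rewrite in_arcE iu iv; move: (iA x xA); cyc_solve.
Qed.

Lemma arcsum_fwd s A B C g : s = A ++ tl g :: B ++ hd g :: C -> uniq s ->
  arcsum s g = \sum_(x <- B) w x.
Proof. by move=> -> U; rewrite /arcsum /arcF arc_sum. Qed.

Lemma arcsum_bwd s A B C g : s = A ++ hd g :: B ++ tl g :: C -> uniq s ->
  arcsum s g = \sum_(x <- C) w x + \sum_(x <- A) w x.
Proof. by move=> -> U; rewrite /arcsum /arcF arc_sum_rev. Qed.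

Lemma wf_uniq s : wf s -> uniq s. Proof. by case/andP. Qed.
Lemma wf_partner s x : wf s -> x \in s -> (x.1, ~~ x.2) \in s.
Proof. by case/andP => _ /allP H /H. Qed.
Lemma mem_labels s x : x \in s -> x.1 \in labels s.
Proof. by move=> xs; rewrite mem_undup; apply: map_f. Qed.
Lemma labels_mem s g : wf s -> g \in labels s -> (tl g \in s) && (hd g \in s).
Proof.
move=> W; rewrite mem_undup => /mapP [[h b] hs /= ->].
have := wf_partner W hs; rewrite /tl /hd /=.
by case: b hs => /= -> ->.
Qed.
Lemma labels_tl s g : wf s -> g \in labels s -> tl g \in s.
Proof. by move=> W /(labels_mem W) /andP []. Qed.
Lemma labels_hd s g : wf s -> g \in labels s -> hd g \in s.
Proof. by move=> W /(labels_mem W) /andP []. Qed.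

Lemma perm_lab s : wf s ->
  perm_eq s [seq (h, b) | h <- labels s, b <- [:: false; true]].
Proof.
move=> W; apply: uniq_perm; first exact: wf_uniq.
  apply: allpairs_uniq; rewrite ?undup_uniq //.
  by move=> [a1 b1] [a2 b2] _ _ /= [-> ->].
move=> [h b]; apply/idP/allpairsP => [hs|[[h' b'] [/= H1 H2 [-> ->]]]].
  by exists (h, b); split => //=; [apply: (mem_labels hs)| case: b {hs}].
by case: b' H2 => _; [apply: labels_hd | apply: labels_tl].
Qed.

Lemma sum_lab s (F : endpt -> int) : wf s ->
  \sum_(x <- s) F x = \sum_(h <- labels s) (F (tl h) + F (hd h)).
Proof.
move=> W; rewrite (perm_big _ (perm_lab W)) big_allpairs.
  by apply: eq_bigr => h _; rewrite !big_cons big_nil /= addr0.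
Qed.

Lemma total_w s : wf s -> \sum_(x <- s) w x = 0.
Proof.
move=> W; rewrite (sum_lab _ W) big1 // => h _; rewrite /w /= addrN.
Qed.

Lemma count_int (T : eqType) (a : pred T) (l : seq T) :
  (count a l)%:Z = \sum_(x <- l) ((a x : nat)%:Z).
Proof.
elim: l => [|x l IH]; first by rewrite big_nil.
by rewrite big_cons /= PoszD IH.
Qed.

Lemma in_arc_compl s a b x : uniq s -> a \in s -> b \in s -> x \in s ->
  a != b -> x != a -> x != b ->
  in_arc s b a x = ~~ in_arc s a b x.
Proof.
move=> U aS bS xS ab xa xb; rewrite !in_arcE cyc_compl //.
- by rewrite index_inj.
- by rewrite index_inj // eq_sym.
- by rewrite index_inj // eq_sym.
Qed.

Lemma in_arc_a s a b : in_arc s a b a = false. Proof. exact: cyc_ii. Qed.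
Lemma in_arc_b s a b : in_arc s a b b = false. Proof. exact: cyc_jj. Qed.

Lemma tl_neq h g : h != g -> tl h != tl g.
Proof. by apply: contra => /eqP [->]. Qed.
Lemma hd_neq h g : h != g -> hd h != hd g.
Proof. by apply: contra => /eqP [->]. Qed.
Lemma tl_hd h g : tl h != hd g. Proof. by apply/eqP; case. Qed.
Lemma hd_tl h g : hd h != tl g. Proof. by apply/eqP; case. Qed.

Lemma nidx_arcsum s g : wf s -> g \in labels s -> nidx s g = arcsum s g.
Proof.
move=> W gl; have U := wf_uniq W.
rewrite /nidx /arcsum (sum_lab _ W) !count_int -sumrB !big_filter.
rewrite [RHS](bigID (fun h => h != g)) /=.
rewrite [X in _ = _ + X]big1 ?addr0; last first.
  by move=> h /negPn /eqP ->; rewrite /arcF !in_arc_a !in_arc_b addr0.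
rewrite big_seq_cond [RHS]big_seq_cond; apply: eq_bigr => h /andP [hl hg].
have tgS := labels_tl W gl; have hgS := labels_hd W gl.
have thS := labels_tl W hl; have hhS := labels_hd W hl.
rewrite /links_pos /links_neg /arcF.
have ne1 : tl g != hd g by apply/eqP; case.
rewrite (in_arc_compl U tgS hgS thS) ?(tl_neq hg) ?tl_hd //.
rewrite (in_arc_compl U tgS hgS hhS) ?(hd_neq hg) ?hd_tl //.
rewrite /w /=.
by case: (in_arc s (tl g) (hd g) (tl h)); case: (in_arc s (tl g) (hd g) (hd h)).
Qed.

Lemma wtl g : w (tl g) = 1. Proof. by []. Qed.
Lemma whd g : w (hd g) = -1. Proof. by []. Qed.
Definition S (l : vstring) : int := \sum_(x <- l) w x.
Lemma S_cat a b : S (a ++ b) = S a + S b. Proof. by rewrite /S big_cat. Qed.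
Lemma S_cons x l : S (x :: l) = w x + S l. Proof. by rewrite /S big_cons. Qed.
Lemma S_nil : S [::] = 0. Proof. by rewrite /S big_nil. Qed.
Lemma total_S s : wf s -> S s = 0. Proof. exact: total_w. Qed.
Lemma arcsum_fwdS s A B C g : s = A ++ tl g :: B ++ hd g :: C -> uniq s ->
  arcsum s g = S B.
Proof. exact: arcsum_fwd. Qed.
Lemma arcsum_bwdS s A B C g : s = A ++ hd g :: B ++ tl g :: C -> uniq s ->
  arcsum s g = S C + S A.
Proof. exact: arcsum_bwd. Qed.
Ltac solve_sums T := rewrite ?S_cat ?S_cons ?S_cat ?S_cons ?S_cat ?S_cons ?S_nil ?wtl ?whd in T; rewrite ?S_cat ?S_cons ?S_cat ?S_cons ?S_cat ?S_cons ?S_nil ?wtl ?whd; lia.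

Lemma wf_filter_lab (P : nat -> bool) s : wf s -> wf (filter (fun p => P p.1) s).
Proof.
move=> W; apply/andP; split; first by rewrite filter_uniq // wf_uniq.
apply/allP => x; rewrite !mem_filter => /andP [Px xs] /=.
by rewrite Px (wf_partner W xs).
Qed.

Lemma wf_cov r s : wf s -> wf (covering r s).
Proof. exact: (wf_filter_lab (fun g => (r%:Z %| nidx s g)%Z)). Qed.

Lemma filter_const (p : pred endpt) (X : seq endpt) b :
  {in X, forall x, p x = b} -> filter p X = if b then X else [::].
Proof.
move=> H; case: b H => H.
  by rewrite (eq_in_filter (a2 := predT)) ?filter_predT.
by rewrite (eq_in_filter (a2 := pred0)) ?filter_pred0.
Qed.

Lemma map_fst_filter (p : pred endpt) s e : e \notin map fst s -> e \notin map fst (filter p s).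
Proof.
apply: contra => /mapP [x]; rewrite mem_filter => /andP [_ xs] ->.
exact: map_f.
Qed.

Lemma idx_rot1 (z : endpt) w y : uniq (z :: w) -> y \in z :: w ->
  (index y (z :: w) = 0 /\ index y (w ++ [:: z]) = size w)%N \/
  (index y (z :: w) = (index y (w ++ [:: z])).+1 /\ index y (w ++ [:: z]) < size w)%N.
Proof.
move=> U; rewrite inE => /orP [/eqP ->|yw].
  left; split; first by rewrite /= eqxx.
  have E : w ++ [:: z] = w ++ [:: z] ++ [::] by [].
  rewrite E idx_seg -?E ?mem_seq1 //=; first by rewrite eqxx addn0.
  by rewrite cats1 -rot1_cons rot_uniq.
right; move: U => /= /andP [zw _].
have zy : (z == y) = false by apply/eqP => E; rewrite E yw in zw.
by rewrite zy index_cat yw index_mem.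
Qed.

Lemma in_arc_rot1 s a b x : uniq s -> a \in s -> b \in s -> x \in s ->
  in_arc (rot 1 s) a b x = in_arc s a b x.
Proof.
case: s => [|z w] // U aS bS xS.
rewrite rot1_cons -cats1 !in_arcE; symmetry; apply: (@cyc_rot1 (size w)).
- exact: idx_rot1.
- exact: idx_rot1.
- exact: idx_rot1.
Qed.

Lemma in_arc_rot k s a b x : uniq s -> a \in s -> b \in s -> x \in s ->
  in_arc (rot k s) a b x = in_arc s a b x.
Proof.
move=> U aS bS xS; elim: k => [|k IH]; first by rewrite rot0.
case: (ltnP k (size s)) => H.
  by rewrite rotS // in_arc_rot1 ?rot_uniq ?mem_rot.
by rewrite rot_oversize // ltnW.
Qed.

Lemma wf_rotE k s : wf (rot k s) = wf s.
Proof.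
have P : perm_eq (rot k s) s by rewrite perm_rot.
rewrite /wf rot_uniq (perm_all _ P); congr (_ && _).
by apply: eq_all => x; rewrite mem_rot.
Qed.

Lemma nidx_rot k s g : wf s -> g \in labels s -> nidx (rot k s) g = nidx s g.
Proof.
move=> W gl; have U := wf_uniq W.
have W' : wf (rot k s) by rewrite wf_rotE.
have gl' : g \in labels (rot k s).
  by rewrite -[g]/((tl g).1); apply: mem_labels; rewrite mem_rot labels_tl.
rewrite !nidx_arcsum // /arcsum.
rewrite (perm_big s) ?perm_rot //; apply: eq_big_seq => x xs.
by rewrite /arcF in_arc_rot // ?labels_tl ?labels_hd.
Qed.

Lemma filter_rot (T : eqType) (p : pred T) k (s : seq T) :
  filter p (rot k s) = rot (count p (take k s)) (filter p s).
Proof.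
have E : filter p s = filter p (take k s) ++ filter p (drop k s) by rewrite -filter_cat cat_take_drop.
by rewrite E -size_filter rot_size_cat /rot filter_cat.
Qed.

Lemma index_map_in (T1 T2 : eqType) (f : T1 -> T2) (s : seq T1) x :
  {in s &, injective f} -> x \in s -> index (f x) (map f s) = index x s.
Proof.
elim: s => [|z s IH] //= inj xS.
case: (z =P x) => [->|zx]; first by rewrite eqxx.
have -> : (f z == f x) = false.
  apply/eqP => E; apply: zx; apply: inj E; rewrite ?inE ?eqxx //.
rewrite IH //.
  by move=> a c ha hc; apply: inj; rewrite inE ?ha ?hc orbT.
by move: xS; rewrite inE eq_sym; case/orP => // /eqP E; case: zx.
Qed.

Lemma uniq_map_inj (T1 T2 : eqType) (f : T1 -> T2) (s : seq T1) :
  uniq (map f s) -> {in s &, injective f}.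
Proof.
elim: s => [|z s IH] //= /andP [nz U] x y; rewrite !inE.
case/orP => [/eqP ->|xs]; case/orP => [/eqP ->|ys] E //.
- by rewrite E map_f in nz.
- by rewrite -E map_f in nz.
- exact: IH.
Qed.

Definition phi (f : nat -> nat) (p : endpt) : endpt := (f p.1, p.2).

Lemma nidx_relabel f s g : wf s -> wf (relabel f s) -> g \in labels s ->
  nidx (relabel f s) (f g) = nidx s g.
Proof.
move=> W W' gl; have U := wf_uniq W; have U' := wf_uniq W'.
have inj : {in s &, injective (phi f)} by apply: uniq_map_inj.
have gl' : f g \in labels (relabel f s).
  rewrite -[f g]/((phi f (tl g)).1); apply: mem_labels; apply: map_f.
  exact: labels_tl.
rewrite !nidx_arcsum // /arcsum /relabel big_map.
apply: eq_big_seq => x xs; rewrite /arcF.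
have -> : in_arc [seq (f p.1, p.2) | p <- s] (tl (f g)) (hd (f g)) (f x.1, x.2)
   = in_arc s (tl g) (hd g) x.
  rewrite !in_arcE.
  rewrite -[(f x.1, x.2)]/(phi f x) -[tl (f g)]/(phi f (tl g)) -[hd (f g)]/(phi f (hd g)).
  rewrite -[[seq (f p.1, p.2) | p <- s]]/(map (phi f) s).
  by rewrite !index_map_in // ?labels_tl ?labels_hd.
by [].
Qed.

Lemma step_homeo r s t : wf s -> wf t -> homeomorphic s t ->
  homotopic (covering r s) (covering r t).
Proof.
move=> W Wt [_ [_ [k [f Et]]]].
have W' : wf (relabel f s) by rewrite -(wf_rotE k) -Et.
apply: rst_step; split; [exact: wf_cov | split; [exact: wf_cov|left]].
split; [exact: wf_cov| split; [exact: wf_cov|]].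
exists (count (fun p => (r%:Z %| nidx t p.1)%Z) (take k (relabel f s))), f.
rewrite {1}/covering [X in filter _ X = _]Et filter_rot; congr rot.
rewrite /relabel filter_map /covering; congr map.
apply: eq_in_filter => x xs /=.
rewrite Et nidx_rot //; last first.
  by rewrite -[f x.1]/((phi f x).1); apply: mem_labels; apply: map_f.
by rewrite nidx_relabel // mem_labels.
Qed.

Lemma subseq_ins (A B X : vstring) : subseq (A ++ B) (A ++ X ++ B).
Proof. apply: cat_subseq => //; apply: (@cat_subseq _ [::] B X B) => //; exact: sub0seq. Qed.

Lemma arcsum_ins A B x1 x2 g : uniq (A ++ x1 :: x2 :: B) ->
  tl g \in A ++ B -> hd g \in A ++ B ->
  tl g != x1 -> tl g != x2 -> hd g != x1 -> hd g != x2 -> w x1 + w x2 = 0 ->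
  arcsum (A ++ x1 :: x2 :: B) g = arcsum (A ++ B) g.
Proof.
move=> U ts hs t1 t2 h1 h2 w0.
have sub : subseq (A ++ B) (A ++ x1 :: x2 :: B) by apply: (subseq_ins A B [:: x1; x2]).
have sub' := mem_subseq sub.
have E : forall x, x \in A ++ B -> arcF (A ++ x1 :: x2 :: B) g x = arcF (A ++ B) g x.
  move=> x xs; rewrite /arcF (in_arc_subseq sub) //.
rewrite /arcsum !big_cat !big_cons /=.
have EA : \sum_(x <- A) arcF (A ++ x1 :: x2 :: B) g x = \sum_(x <- A) arcF (A ++ B) g x.
  by apply: eq_big_seq => x xA; rewrite E // mem_cat xA.
have EB : \sum_(x <- B) arcF (A ++ x1 :: x2 :: B) g x = \sum_(x <- B) arcF (A ++ B) g x.
  by apply: eq_big_seq => x xB; rewrite E // mem_cat xB orbT.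
rewrite EA EB; congr (_ + _); rewrite addrA.
suff -> : arcF (A ++ [:: x1, x2 & B]) g x1 + arcF (A ++ [:: x1, x2 & B]) g x2 = 0 by rewrite add0r.
rewrite /arcF (in_arc_adj U) ?sub' //.
by case: ifP => _; rewrite ?w0 ?addr0.
Qed.

Lemma notin_lab (s : vstring) (e : nat) (b : bool) : e \notin map fst s -> (e, b) \notin s.
Proof. by apply: contra => H; rewrite -[e]/((e, b).1) map_f. Qed.

Lemma lab_neq (s : vstring) (e g : nat) : e \notin map fst s -> g \in labels s -> g != e.
Proof. by move=> ne; rewrite mem_undup; apply: contraTneq => ->. Qed.

Lemma step_a r s t : wf s -> wf t -> move_a s t ->
  homotopic (covering r s) (covering r t).
Proof.
move=> W Wt [s1 [s2 [e [Es ne Et]]]].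
have U := wf_uniq Wt.
have Ut : uniq (s1 ++ tl e :: hd e :: s2) by rewrite -Et.
have subst_t : forall x, x \in s -> x \in t.
  move=> x; rewrite Es Et !mem_cat !inE => /orP [->|->] //; by rewrite !orbT.
have Hg : forall g, g \in labels s -> nidx t g = nidx s g.
  move=> g gl; have tgs := labels_tl W gl; have hgs := labels_hd W gl.
  have ge := lab_neq ne gl.
  rewrite !nidx_arcsum //; last first.
    by rewrite -[g]/((tl g).1); apply: mem_labels; apply: subst_t.
  rewrite Et (arcsum_ins Ut) -?Es //.
  - exact: tl_neq.
  - exact: tl_hd.
  - exact: hd_tl.
  - exact: hd_neq.
have He : nidx t e = 0.
  rewrite nidx_arcsum //; last by rewrite -[e]/((tl e).1); apply: mem_labels; rewrite Et mem_cat inE eqxx orbT.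
  by rewrite (@arcsum_fwdS t s1 [::] s2) ?S_nil.
apply: rst_step; split; [exact: wf_cov | split; [exact: wf_cov | right; left]].
exists (filter (fun p => (r%:Z %| nidx s p.1)%Z) s1),
       (filter (fun p => (r%:Z %| nidx s p.1)%Z) s2), e; split.
- by rewrite /covering [X in filter _ X]Es filter_cat.
- exact: map_fst_filter.
- rewrite /covering [X in filter _ X]Et !filter_cat; congr (_ ++ _ ++ _).
  + by apply: eq_in_filter => x xs; rewrite Hg // mem_labels // Es mem_cat xs.
  + rewrite (@filter_const _ _ true) // => x; rewrite !inE => /orP [] /eqP -> /=;
    by rewrite He dvdz0.
  + by apply: eq_in_filter => x xs; rewrite Hg // mem_labels // Es mem_cat xs orbT.
Qed.

Lemma perm2 (a b : endpt) X : perm_eq X [:: a; b] ->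
  exists x1 x2, X = [:: x1; x2] /\ (x1 = a /\ x2 = b \/ x1 = b /\ x2 = a).
Proof.
move=> P; have := perm_size P; case: X P => [|x1 [|x2 [|x3 X]]] //= P _.
exists x1, x2; split => //.
have : x1 \in [:: a; b] by rewrite -(perm_mem P) inE eqxx.
rewrite !inE => /orP [/eqP E|/eqP E]; subst x1.
  by left; split => //; move: P; rewrite perm_cons => /(perm_small_eq (isT : size [:: b] <= 1)%N) [->].
right; split => //.
have P0 : perm_eq [:: a; b] [:: b; a] by rewrite (perm_catC [:: a] [:: b]).
have P' : perm_eq [:: b; x2] [:: b; a] := perm_trans P P0.
by move: P'; rewrite perm_cons => /(perm_small_eq (isT : size [:: a] <= 1)%N) [->].
Qed.

Lemma ep_neq (x : endpt) g b : x.1 != g -> (g, b) != x.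
Proof. by apply: contra => /eqP <-. Qed.

Lemma arcsum_ins2 s1 s2 s3 x1 x2 y1 y2 g :
  uniq (s1 ++ x1 :: x2 :: s2 ++ y1 :: y2 :: s3) ->
  tl g \in s1 ++ s2 ++ s3 -> hd g \in s1 ++ s2 ++ s3 ->
  x1.1 != g -> x2.1 != g -> y1.1 != g -> y2.1 != g ->
  w x1 + w x2 = 0 -> w y1 + w y2 = 0 ->
  arcsum (s1 ++ x1 :: x2 :: s2 ++ y1 :: y2 :: s3) g = arcsum (s1 ++ s2 ++ s3) g.
Proof.
move=> U ts hs n1 n2 n3 n4 w1 w2.
have E1 : s1 ++ x1 :: x2 :: s2 ++ y1 :: y2 :: s3 = (s1 ++ x1 :: x2 :: s2) ++ y1 :: y2 :: s3
  by rewrite -catA.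
have E2 : (s1 ++ x1 :: x2 :: s2) ++ s3 = s1 ++ x1 :: x2 :: (s2 ++ s3) by rewrite -catA.
have U2 : uniq (s1 ++ x1 :: x2 :: (s2 ++ s3)).
  rewrite -E2; apply: (subseq_uniq _ U); rewrite E1.
  exact: (subseq_ins _ _ [:: y1; y2]).
rewrite E1 arcsum_ins -?E1 // ?E2; last first.
- exact: ep_neq. - exact: ep_neq. - exact: ep_neq. - exact: ep_neq.
- by move: hs; rewrite !(mem_cat, inE); case/or3P => ->; rewrite ?orbT.
- by move: ts; rewrite !(mem_cat, inE); case/or3P => ->; rewrite ?orbT.
rewrite arcsum_ins //.
- exact: ep_neq. - exact: ep_neq. - exact: ep_neq. - exact: ep_neq.
Qed.


Lemma step_b r s t : wf s -> wf t -> move_b s t ->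
  homotopic (covering r s) (covering r t).
Proof.
move=> W Wt [s1 [s2 [s3 [e [f [X [Y [Es [nef [ne [nf [PX [PY Et]]]]]]]]]]]]].
have U := wf_uniq Wt.
have [x1 [x2 [EX HX]]] := perm2 PX.
have [y1 [y2 [EY HY]]] := perm2 PY.
have Ut : uniq (s1 ++ x1 :: x2 :: s2 ++ y1 :: y2 :: s3) by move: U; rewrite Et EX EY.
have sub_t : forall x, x \in s -> x \in t.
  move=> x; rewrite Es Et !mem_cat; case/or3P => ->; by rewrite ?orbT.
have HlX : forall x, x \in X -> x.1 = e \/ x.1 = f.
  by move=> x; rewrite (perm_mem PX) !inE => /orP [] /eqP ->; [left|right].
have HlY : forall x, x \in Y -> x.1 = e \/ x.1 = f.
  by move=> x; rewrite (perm_mem PY) !inE => /orP [] /eqP ->; [left|right].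
have Hg : forall g, g \in labels s -> nidx t g = nidx s g.
  move=> g gl; have tgs := labels_tl W gl; have hgs := labels_hd W gl.
  have ge := lab_neq ne gl; have gf := lab_neq nf gl.
  have nq : forall x : endpt, x.1 = e \/ x.1 = f -> x.1 != g.
    by move=> x [] E; rewrite E eq_sym.
  rewrite !nidx_arcsum //; last first.
    by rewrite -[g]/((tl g).1); apply: mem_labels; apply: sub_t.
  rewrite Et EX EY [in RHS]Es (arcsum_ins2 Ut) -?Es //.
  - by apply: nq; apply: HlX; rewrite EX !inE eqxx.
  - by apply: nq; apply: HlX; rewrite EX !inE eqxx orbT.
  - by apply: nq; apply: HlY; rewrite EY !inE eqxx.
  - by apply: nq; apply: HlY; rewrite EY !inE eqxx orbT.
  - by case: HX => [[-> ->]|[-> ->]]; rewrite /w /= ?addrN ?addNr.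
  - by case: HY => [[-> ->]|[-> ->]]; rewrite /w /= ?addrN ?addNr.
have el : e \in labels t.
  by rewrite -[e]/((tl e).1); apply: mem_labels; rewrite Et !mem_cat (perm_mem PX) !inE eqxx ?orbT.
have fl : f \in labels t.
  by rewrite -[f]/((tl f).1); apply: mem_labels; rewrite Et !mem_cat (perm_mem PY) !inE eqxx ?orbT.
have Hef : nidx t f = - nidx t e.
  rewrite !nidx_arcsum //.
  have T := total_S Wt; rewrite Et EX EY in T.
  case: HX => [[? ?]|[? ?]]; case: HY => [[? ?]|[? ?]]; subst x1 x2 y1 y2.
  - rewrite (@arcsum_fwdS t s1 (hd f :: s2) (tl f :: s3) e); last by [];
      last by rewrite Et EX EY /= -?catA.
    rewrite (@arcsum_bwdS t (s1 ++ [:: tl e]) (s2 ++ [:: hd e]) s3 f); last by [];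
      last by rewrite Et EX EY /= -?catA.
    solve_sums T.
  - rewrite (@arcsum_fwdS t s1 (hd f :: s2 ++ [:: tl f]) s3 e); last by [];
      last by rewrite Et EX EY /= -?catA.
    rewrite (@arcsum_bwdS t (s1 ++ [:: tl e]) s2 (hd e :: s3) f); last by [];
      last by rewrite Et EX EY /= -?catA.
    solve_sums T.
  - rewrite (@arcsum_fwdS t (s1 ++ [:: hd f]) s2 (tl f :: s3) e); last by [];
      last by rewrite Et EX EY /= -?catA.
    rewrite (@arcsum_bwdS t s1 (tl e :: s2 ++ [:: hd e]) s3 f); last by [];
      last by rewrite Et EX EY /= -?catA.
    solve_sums T.
  - rewrite (@arcsum_fwdS t (s1 ++ [:: hd f]) (s2 ++ [:: tl f]) s3 e); last by [];
      last by rewrite Et EX EY /= -?catA.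
    rewrite (@arcsum_bwdS t s1 (tl e :: s2) (hd e :: s3) f); last by [];
      last by rewrite Et EX EY /= -?catA.
    solve_sums T.
pose Pt := fun p : endpt => (r%:Z %| nidx t p.1)%Z.
pose Ps := fun p : endpt => (r%:Z %| nidx s p.1)%Z.
have HX' : {in X, forall x, Pt x = (r%:Z %| nidx t e)%Z}.
  by move=> x /HlX [] E; rewrite /Pt E // Hef rpredN.
have HY' : {in Y, forall x, Pt x = (r%:Z %| nidx t e)%Z}.
  by move=> x /HlY [] E; rewrite /Pt E // Hef rpredN.
have Hs : forall l, (forall x, x \in l -> x \in s) -> filter Pt l = filter Ps l.
  by move=> l H; apply: eq_in_filter => x xl; rewrite /Pt /Ps Hg // mem_labels // H.
have s1s : forall x, x \in s1 -> x \in s by move=> x xs; rewrite Es !mem_cat xs.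
have s2s : forall x, x \in s2 -> x \in s by move=> x xs; rewrite Es !mem_cat xs !orbT.
have s3s : forall x, x \in s3 -> x \in s by move=> x xs; rewrite Es !mem_cat xs !orbT.
have Ecs : covering r s = filter Ps s1 ++ filter Ps s2 ++ filter Ps s3.
  by rewrite /covering [X in filter _ X]Es !filter_cat.
have Ect : covering r t =
    filter Ps s1 ++ filter Pt X ++ filter Ps s2 ++ filter Pt Y ++ filter Ps s3.
  by rewrite /covering [X in filter _ X]Et !filter_cat -(Hs s1 s1s) -(Hs s2 s2s) -(Hs s3 s3s).
rewrite (filter_const HX') (filter_const HY') in Ect.
case Hbe: (r%:Z %| nidx t e)%Z in Ect.
- apply: rst_step; split; [exact: wf_cov | split; [exact: wf_cov | right; right; left]].
  exists (filter Ps s1), (filter Ps s2), (filter Ps s3), e, f, X, Y.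
  do 6? split => //; exact: map_fst_filter.
- by rewrite Ect Ecs; apply: rst_refl.
Qed.

Lemma perm_swap (A B : vstring) u v : perm_eq (A ++ v :: u :: B) (A ++ u :: v :: B).
Proof.
rewrite perm_cat2l.
have -> : v :: u :: B = [:: v; u] ++ B by [].
have -> : u :: v :: B = [:: u; v] ++ B by [].
by rewrite perm_cat2r (perm_catC [:: v] [:: u]).
Qed.

Lemma in_arc_swap A B u v a b x : uniq (A ++ u :: v :: B) ->
  a \in A ++ u :: v :: B -> b \in A ++ u :: v :: B ->
  a != u -> a != v -> b != u -> b != v -> x \in A ++ u :: v :: B ->
  in_arc (A ++ v :: u :: B) a b x = in_arc (A ++ u :: v :: B) a b x.
Proof.
move=> U aS bS au av bu bv xS.
have Ut : uniq (A ++ v :: u :: B) by rewrite (perm_uniq (perm_swap A B u v)).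
have tS : forall y, y \in A ++ v :: u :: B = (y \in A ++ u :: v :: B).
  by move=> y; rewrite (perm_mem (perm_swap A B u v)).
have sub1 : subseq (A ++ u :: B) (A ++ u :: v :: B).
  apply: cat_subseq => //; apply: (@cat_subseq _ [:: u] B [:: u; v] B) => //; by rewrite sub1seq inE eqxx.
have sub2 : subseq (A ++ u :: B) (A ++ v :: u :: B).
  apply: cat_subseq => //; apply: (@cat_subseq _ [:: u] B [:: v; u] B) => //; by rewrite sub1seq !inE eqxx orbT.
have inH : forall y, y \in A ++ u :: v :: B -> y != v -> y \in A ++ u :: B.
  by move=> y; rewrite !(mem_cat, inE) => + yv; rewrite (negbTE yv).
have aH := inH a aS av; have bH := inH b bS bv.
have uH : u \in A ++ u :: B by rewrite mem_cat inE eqxx orbT.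
have aT : a \in A ++ v :: u :: B by rewrite tS.
have bT : b \in A ++ v :: u :: B by rewrite tS.
case: (x =P v) => [->|/eqP xv].
  have E1 := in_arc_adj Ut aT bT av au bv bu.
  have E2 := in_arc_adj U aS bS au av bu bv.
  by rewrite E1 -E2 -(in_arc_subseq sub2 Ut aH bH uH) (in_arc_subseq sub1 U aH bH uH).
have xH := inH x xS xv.
by rewrite -(in_arc_subseq sub2 Ut aH bH xH) (in_arc_subseq sub1 U aH bH xH).
Qed.

Lemma arcsum_swap A B u v g : uniq (A ++ u :: v :: B) ->
  tl g \in A ++ u :: v :: B -> hd g \in A ++ u :: v :: B ->
  u.1 != g -> v.1 != g ->
  arcsum (A ++ v :: u :: B) g = arcsum (A ++ u :: v :: B) g.
Proof.
move=> U tS hS ug vg.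
rewrite /arcsum (perm_big _ (perm_swap A B u v)).
by apply: eq_big_seq => x xS; rewrite /arcF in_arc_swap //; apply: ep_neq.
Qed.

Lemma arcsum_swap3 s1 s2 s3 s4 a1 b1 a2 b2 a3 b3 g :
  uniq (s1 ++ a1 :: b1 :: s2 ++ a2 :: b2 :: s3 ++ a3 :: b3 :: s4) ->
  tl g \in s1 ++ a1 :: b1 :: s2 ++ a2 :: b2 :: s3 ++ a3 :: b3 :: s4 ->
  hd g \in s1 ++ a1 :: b1 :: s2 ++ a2 :: b2 :: s3 ++ a3 :: b3 :: s4 ->
  a1.1 != g -> b1.1 != g -> a2.1 != g -> b2.1 != g -> a3.1 != g -> b3.1 != g ->
  arcsum (s1 ++ b1 :: a1 :: s2 ++ b2 :: a2 :: s3 ++ b3 :: a3 :: s4) g =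
  arcsum (s1 ++ a1 :: b1 :: s2 ++ a2 :: b2 :: s3 ++ a3 :: b3 :: s4) g.
Proof.
set s0 := s1 ++ a1 :: b1 :: s2 ++ a2 :: b2 :: s3 ++ a3 :: b3 :: s4.
move=> U tS hS n1 n2 n3 n4 n5 n6.
set sA := s1 ++ b1 :: a1 :: s2 ++ a2 :: b2 :: s3 ++ a3 :: b3 :: s4.
set sB := s1 ++ b1 :: a1 :: s2 ++ b2 :: a2 :: s3 ++ a3 :: b3 :: s4.
have PA : perm_eq sA s0 by apply: perm_swap.
have EA : sA = (s1 ++ b1 :: a1 :: s2) ++ a2 :: b2 :: (s3 ++ a3 :: b3 :: s4) by rewrite /sA -catA.
have EB : sB = (s1 ++ b1 :: a1 :: s2) ++ b2 :: a2 :: (s3 ++ a3 :: b3 :: s4) by rewrite /sB -catA.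
have PB : perm_eq sB sA by rewrite EA EB; apply: perm_swap.
have EB' : sB = (s1 ++ b1 :: a1 :: s2 ++ b2 :: a2 :: s3) ++ a3 :: b3 :: s4 by rewrite /sB; do 4 (rewrite -?catA /=).
have EC : s1 ++ b1 :: a1 :: s2 ++ b2 :: a2 :: s3 ++ b3 :: a3 :: s4 =
          (s1 ++ b1 :: a1 :: s2 ++ b2 :: a2 :: s3) ++ b3 :: a3 :: s4 by do 4 (rewrite -?catA /=).
have UA : uniq sA by rewrite (perm_uniq PA).
have UB : uniq sB by rewrite (perm_uniq PB).
have mA : forall y, y \in sA = (y \in s0) by move=> y; rewrite (perm_mem PA).
have mB : forall y, y \in sB = (y \in s0) by move=> y; rewrite (perm_mem PB) mA.
rewrite EC arcsum_swap -?EB' ?mB //.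
rewrite EB arcsum_swap -?EA ?mA //.
rewrite /sA arcsum_swap //.
Qed.

Lemma dvd3 (d a b c : int) : a + b + c = 0 -> (d %| a)%Z -> (d %| b)%Z -> (d %| c)%Z.
Proof.
move=> E ha hb; have -> : c = - (a + b).
  by apply/eqP; rewrite -addr_eq0 addrC E.
by rewrite rpredN rpredD.
Qed.

Lemma filter2 (P : pred endpt) a b :
  ~~ (P a && P b) -> filter P [:: a; b] = filter P [:: b; a].
Proof. by rewrite /=; case: (P a); case: (P b). Qed.

Lemma assemble r s t s1 s2 s3 s4 a1 b1 a2 b2 a3 b3 (Ps : pred endpt) :
  covering r s = filter Ps (s1 ++ [:: a1; b1] ++ s2 ++ [:: a2; b2] ++ s3 ++ [:: a3; b3] ++ s4) ->
  covering r t = filter Ps (s1 ++ [:: b1; a1] ++ s2 ++ [:: b2; a2] ++ s3 ++ [:: b3; a3] ++ s4) ->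
  wf (covering r s) -> wf (covering r t) ->
  (forall c1 c2 c3 c4,
     covering r s = c1 ++ [:: a1; b1] ++ c2 ++ [:: a2; b2] ++ c3 ++ [:: a3; b3] ++ c4 ->
     covering r t = c1 ++ [:: b1; a1] ++ c2 ++ [:: b2; a2] ++ c3 ++ [:: b3; a3] ++ c4 ->
     move_c (covering r s) (covering r t)) ->
  (Ps a1 -> Ps b1 -> [&& Ps a2, Ps b2, Ps a3 & Ps b3]) ->
  (Ps a2 -> Ps b2 -> [&& Ps a1, Ps b1, Ps a3 & Ps b3]) ->
  (Ps a3 -> Ps b3 -> [&& Ps a1, Ps b1, Ps a2 & Ps b2]) ->
  homotopic (covering r s) (covering r t).
Proof.
move=> Ecs Ect Ws Wt Hmc H1 H2 H3.
have [Hall|[N1 N2 N3]] : [&& Ps a1, Ps b1, Ps a2, Ps b2, Ps a3 & Ps b3] \/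
    [/\ ~~ (Ps a1 && Ps b1), ~~ (Ps a2 && Ps b2) & ~~ (Ps a3 && Ps b3)].
  move: H1 H2 H3; case: (Ps a1); case: (Ps b1); case: (Ps a2); case: (Ps b2);
  case: (Ps a3); case: (Ps b3) => //= H1 H2 H3;
  first [by left | by right | by move: (H1 isT isT) | by move: (H2 isT isT)
        | by move: (H3 isT isT)].
  move: Hall => /and5P [h1 h2 h3 h4 /andP [h5 h6]].
  apply: rst_step; split => //; split => //; right; right; right.
  apply: (Hmc (filter Ps s1) (filter Ps s2) (filter Ps s3) (filter Ps s4)).
  + by rewrite Ecs !filter_cat /= h1 h2 h3 h4 h5 h6.
  + by rewrite Ect !filter_cat /= h1 h2 h3 h4 h5 h6.
- rewrite Ecs Ect !filter_cat (filter2 N1) (filter2 N2) (filter2 N3).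
  exact: rst_refl.
Qed.

Lemma perm_cons2 (a b : endpt) (R R' : vstring) : perm_eq R R' -> perm_eq (a :: b :: R) (b :: a :: R').
Proof.
move=> P; apply: (perm_trans (perm_swap [::] R b a)).
by rewrite /= !perm_cons.
Qed.

Lemma perm_swap3 (s1 s2 s3 s4 : vstring) (a1 b1 a2 b2 a3 b3 : endpt) :
  perm_eq (s1 ++ b1 :: a1 :: s2 ++ b2 :: a2 :: s3 ++ b3 :: a3 :: s4)
          (s1 ++ a1 :: b1 :: s2 ++ a2 :: b2 :: s3 ++ a3 :: b3 :: s4).
Proof.
rewrite perm_cat2l; apply: perm_cons2.
rewrite perm_cat2l; apply: perm_cons2.
rewrite perm_cat2l; apply: perm_cons2.
exact: perm_refl.
Qed.

Ltac Srw := rewrite ?S_cat ?S_cons ?S_cat ?S_cons ?S_cat ?S_cons ?S_cat ?S_cons ?S_nil ?wtl ?whd.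
Ltac cat_eq E := by rewrite E; do 5 (rewrite -?catA /=).

Lemma step_c1 r s t s1 s2 s3 s4 e1 e2 e3 : wf s -> wf t ->
  s = s1 ++ [:: hd e3; tl e1] ++ s2 ++ [:: hd e1; tl e2] ++ s3 ++ [:: hd e2; tl e3] ++ s4 ->
  t = s1 ++ [:: tl e1; hd e3] ++ s2 ++ [:: tl e2; hd e1] ++ s3 ++ [:: tl e3; hd e2] ++ s4 ->
  homotopic (covering r s) (covering r t).
Proof.
move=> W Wt Es0 Et0.
have U := wf_uniq W; have Ut := wf_uniq Wt.
have Es : s = s1 ++ hd e3 :: tl e1 :: s2 ++ hd e1 :: tl e2 :: s3 ++ hd e2 :: tl e3 :: s4 by exact: Es0.
have Et : t = s1 ++ tl e1 :: hd e3 :: s2 ++ tl e2 :: hd e1 :: s3 ++ tl e3 :: hd e2 :: s4 by exact: Et0.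
have Pts : perm_eq t s by rewrite Et Es; apply: perm_swap3.
have mts : forall y, (y \in t) = (y \in s) by move=> y; rewrite (perm_mem Pts).
have inS : forall g, tl g \in s -> g \in labels s /\ g \in labels t.
  by move=> g H; split; rewrite -[g]/((tl g).1); apply: mem_labels; rewrite ?mts.
have [l1 l1'] : e1 \in labels s /\ e1 \in labels t by apply: inS; rewrite Es !(mem_cat, inE) eqxx !orbT.
have [l2 l2'] : e2 \in labels s /\ e2 \in labels t by apply: inS; rewrite Es !(mem_cat, inE) eqxx !orbT.
have [l3 l3'] : e3 \in labels s /\ e3 \in labels t by apply: inS; rewrite Es !(mem_cat, inE) eqxx !orbT.
have N1s : nidx s e1 = S s2.
  by rewrite nidx_arcsum // (@arcsum_fwdS s (s1 ++ [:: hd e3]) s2 (tl e2 :: s3 ++ hd e2 :: tl e3 :: s4) e1) //; cat_eq Es.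
have N1t : nidx t e1 = S (hd e3 :: s2 ++ [:: tl e2]).
  by rewrite nidx_arcsum // (@arcsum_fwdS t s1 (hd e3 :: s2 ++ [:: tl e2]) (s3 ++ tl e3 :: hd e2 :: s4) e1) //; cat_eq Et.
have N2s : nidx s e2 = S s3.
  by rewrite nidx_arcsum // (@arcsum_fwdS s (s1 ++ hd e3 :: tl e1 :: s2 ++ [:: hd e1]) s3 (tl e3 :: s4) e2) //; cat_eq Es.
have N2t : nidx t e2 = S (hd e1 :: s3 ++ [:: tl e3]).
  by rewrite nidx_arcsum // (@arcsum_fwdS t (s1 ++ tl e1 :: hd e3 :: s2) (hd e1 :: s3 ++ [:: tl e3]) s4 e2) //; cat_eq Et.
have N3s : nidx s e3 = S s4 + S s1.
  by rewrite nidx_arcsum // (@arcsum_bwdS s s1 (tl e1 :: s2 ++ hd e1 :: tl e2 :: s3 ++ [:: hd e2]) s4 e3) //; cat_eq Es.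
have N3t : nidx t e3 = S (hd e2 :: s4) + S (s1 ++ [:: tl e1]).
  by rewrite nidx_arcsum // (@arcsum_bwdS t (s1 ++ [:: tl e1]) (s2 ++ tl e2 :: hd e1 :: s3) (hd e2 :: s4) e3) //; cat_eq Et.
have T := total_S W; rewrite Es in T.
have Hsum : nidx s e1 + nidx s e2 + nidx s e3 = 0.
  rewrite N1s N2s N3s; Srw; move: T; Srw; lia.
have Hg : forall g, g \in labels s -> nidx t g = nidx s g.
  move=> g gl.
  case: (g =P e1) => [->|/eqP n1]; first by rewrite N1s N1t; Srw; lia.
  case: (g =P e2) => [->|/eqP n2]; first by rewrite N2s N2t; Srw; lia.
  case: (g =P e3) => [->|/eqP n3]; first by rewrite N3s N3t; Srw; lia.
  have [_ gl'] := inS g (labels_tl W gl).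
  rewrite !nidx_arcsum // Et Es arcsum_swap3 -?Es ?labels_tl ?labels_hd //; by rewrite eq_sym.
pose Ps := fun p : endpt => (r%:Z %| nidx s p.1)%Z.
apply: (@assemble r s t s1 s2 s3 s4 _ _ _ _ _ _ Ps).
- by rewrite /covering [X in filter _ X]Es0.
- rewrite /covering [X in filter _ X]Et0; apply: eq_in_filter => y yt.
  rewrite Hg // mem_labels // -mts Et0 //.
- exact: wf_cov.
- exact: wf_cov.
- move=> c1 c2 c3 c4 E1 E2; exists c1, c2, c3, c4, e1, e2, e3; by left.
- rewrite /Ps /= => h1 h2; rewrite h1 h2 (dvd3 (etrans (addrAC _ _ _) Hsum)) //.
- by rewrite /Ps /= => h1 h2; rewrite h1 h2 (dvd3 Hsum).
- have Hs3 : nidx s e2 + nidx s e3 + nidx s e1 = 0 by move: Hsum; lia.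
  by rewrite /Ps /= => h1 h2; rewrite h1 h2 (dvd3 Hs3).
Qed.

Lemma step_c2 r s t s1 s2 s3 s4 e1 e2 e3 : wf s -> wf t ->
  s = s1 ++ [:: hd e3; tl e1] ++ s2 ++ [:: hd e2; tl e3] ++ s3 ++ [:: hd e1; tl e2] ++ s4 ->
  t = s1 ++ [:: tl e1; hd e3] ++ s2 ++ [:: tl e3; hd e2] ++ s3 ++ [:: tl e2; hd e1] ++ s4 ->
  homotopic (covering r s) (covering r t).
Proof.
move=> W Wt Es0 Et0.
have U := wf_uniq W; have Ut := wf_uniq Wt.
have Es : s = s1 ++ hd e3 :: tl e1 :: s2 ++ hd e2 :: tl e3 :: s3 ++ hd e1 :: tl e2 :: s4 by exact: Es0.
have Et : t = s1 ++ tl e1 :: hd e3 :: s2 ++ tl e3 :: hd e2 :: s3 ++ tl e2 :: hd e1 :: s4 by exact: Et0.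
have Pts : perm_eq t s by rewrite Et Es; apply: perm_swap3.
have mts : forall y, (y \in t) = (y \in s) by move=> y; rewrite (perm_mem Pts).
have inS : forall g, tl g \in s -> g \in labels s /\ g \in labels t.
  by move=> g H; split; rewrite -[g]/((tl g).1); apply: mem_labels; rewrite ?mts.
have [l1 l1'] : e1 \in labels s /\ e1 \in labels t by apply: inS; rewrite Es !(mem_cat, inE) eqxx !orbT.
have [l2 l2'] : e2 \in labels s /\ e2 \in labels t by apply: inS; rewrite Es !(mem_cat, inE) eqxx !orbT.
have [l3 l3'] : e3 \in labels s /\ e3 \in labels t by apply: inS; rewrite Es !(mem_cat, inE) eqxx !orbT.
have N1s : nidx s e1 = S (s2 ++ hd e2 :: tl e3 :: s3).
  by rewrite nidx_arcsum // (@arcsum_fwdS s (s1 ++ [:: hd e3]) (s2 ++ hd e2 :: tl e3 :: s3) (tl e2 :: s4) e1) //; cat_eq Es.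
have N1t : nidx t e1 = S (hd e3 :: s2 ++ tl e3 :: hd e2 :: s3 ++ [:: tl e2]).
  by rewrite nidx_arcsum // (@arcsum_fwdS t s1 (hd e3 :: s2 ++ tl e3 :: hd e2 :: s3 ++ [:: tl e2]) s4 e1) //; cat_eq Et.
have N2s : nidx s e2 = S s4 + S (s1 ++ hd e3 :: tl e1 :: s2).
  by rewrite nidx_arcsum // (@arcsum_bwdS s (s1 ++ hd e3 :: tl e1 :: s2) (tl e3 :: s3 ++ [:: hd e1]) s4 e2) //; cat_eq Es.
have N2t : nidx t e2 = S (hd e1 :: s4) + S (s1 ++ tl e1 :: hd e3 :: s2 ++ [:: tl e3]).
  by rewrite nidx_arcsum // (@arcsum_bwdS t (s1 ++ tl e1 :: hd e3 :: s2 ++ [:: tl e3]) s3 (hd e1 :: s4) e2) //; cat_eq Et.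
have N3s : nidx s e3 = S (s3 ++ hd e1 :: tl e2 :: s4) + S s1.
  by rewrite nidx_arcsum // (@arcsum_bwdS s s1 (tl e1 :: s2 ++ [:: hd e2]) (s3 ++ hd e1 :: tl e2 :: s4) e3) //; cat_eq Es.
have N3t : nidx t e3 = S (hd e2 :: s3 ++ tl e2 :: hd e1 :: s4) + S (s1 ++ [:: tl e1]).
  by rewrite nidx_arcsum // (@arcsum_bwdS t (s1 ++ [:: tl e1]) s2 (hd e2 :: s3 ++ tl e2 :: hd e1 :: s4) e3) //; cat_eq Et.
have T := total_S W; rewrite Es in T.
have Hsum : nidx s e1 + nidx s e2 + nidx s e3 = 0.
  rewrite N1s N2s N3s; Srw; move: T; Srw; lia.
have Hg : forall g, g \in labels s -> nidx t g = nidx s g.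
  move=> g gl.
  case: (g =P e1) => [->|/eqP n1]; first by rewrite N1s N1t; Srw; lia.
  case: (g =P e2) => [->|/eqP n2]; first by rewrite N2s N2t; Srw; lia.
  case: (g =P e3) => [->|/eqP n3]; first by rewrite N3s N3t; Srw; lia.
  have [_ gl'] := inS g (labels_tl W gl).
  rewrite !nidx_arcsum // Et Es arcsum_swap3 -?Es ?labels_tl ?labels_hd //; by rewrite eq_sym.
pose Ps := fun p : endpt => (r%:Z %| nidx s p.1)%Z.
have Hs2 : nidx s e1 + nidx s e3 + nidx s e2 = 0 by move: Hsum; lia.
have Hs3 : nidx s e2 + nidx s e3 + nidx s e1 = 0 by move: Hsum; lia.
apply: (@assemble r s t s1 s2 s3 s4 _ _ _ _ _ _ Ps).
- by rewrite /covering [X in filter _ X]Es0.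
- rewrite /covering [X in filter _ X]Et0; apply: eq_in_filter => y yt.
  rewrite Hg // mem_labels // -mts Et0 //.
- exact: wf_cov.
- exact: wf_cov.
- move=> c1 c2 c3 c4 E1 E2; exists c1, c2, c3, c4, e1, e2, e3; by right.
- by rewrite /Ps /= => h1 h2; rewrite h1 h2 (dvd3 Hs2).
- by rewrite /Ps /= => h1 h2; rewrite h1 h2 (dvd3 Hs3).
- by rewrite /Ps /= => h1 h2; rewrite h1 h2 (dvd3 Hsum).
Qed.

Lemma step_c r s t : wf s -> wf t -> move_c s t ->
  homotopic (covering r s) (covering r t).
Proof.
move=> W Wt [s1 [s2 [s3 [s4 [e1 [e2 [e3 [[Es Et]|[Es Et]]]]]]]]].
- exact: (step_c1 _ W Wt Es Et).
- exact: (step_c2 _ W Wt Es Et).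
Qed.

Lemma step_all r s t : hstep s t -> homotopic (covering r s) (covering r t).
Proof.
move=> [W [Wt [H|[H|[H|H]]]]].
- exact: step_homeo.
- exact: step_a.
- exact: step_b.
- exact: step_c.
Qed.

Local Close Scope ring_scope.

Theorem lemma3p2 (r : nat) (alpha beta : vstring) :
  0 < r -> wf alpha -> wf beta -> homotopic alpha beta ->
  homotopic (covering r alpha) (covering r beta).
Proof.
move=> _ _ _; elim.
- by move=> x y H; apply: step_all.
- by move=> x; apply: rst_refl.
- by move=> x y _ IH; apply: rst_sym.
- by move=> x y z _ IH1 _ IH2; apply: rst_trans IH2.
Qed.
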